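(* Let $X$ be a finite set, $0<p<1$, and let $\mathcal F\subseteq 2^X$ be a monotone increasing family. Then $$(1-p)\,I_p(\mathcal F)\;\ge\;(1-\mu_p(\mathcal F))\,\log_{1-p}\big(1-\mu_p(\mathcal F)\big),$$ with the convention $0\cdot\log_{1-p}0=0$.
   Context: For a finite set $X$ with $|X|=n$ and $p\in[0,1]$, $\mu_p$ is the product measure on $2^X$ given by $\mu_p(S)=p^{|S|}(1-p)^{n-|S|}$, and $\mu_p(\mathcal F)=\sum_{S\in\mathcal F}\mu_p(S)$. A family $\mathcal F\subseteq 2^X$ is monotone increasing if $B\supseteq A\in\mathcal F$ implies $B\in\mathcal F$. The total influence is $I_p(\mathcal F)=\sum_{i\in X}\mu_p(\{S\subseteq X: |\mathcal F\cap\{S,\,S\triangle\{i\}\}|=1\})$. Here $\log_q x=\ln x/\ln q$. *)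

(* Defs.v *)
From mathcomp Require Import all_boot all_order all_algebra.
From mathcomp Require Import reals exp.
Set Implicit Arguments. Unset Strict Implicit. Unset Printing Implicit Defensive.
Import Order.TTheory GRing.Theory Num.Theory.
Local Open Scope ring_scope.

Definition mu_set (R : realType) (X : finType) (p : R) (S : {set X}) : R :=
  p ^+ #|S| * (1 - p) ^+ (#|X| - #|S|).

Definition mu (R : realType) (X : finType) (p : R) (F : {set {set X}}) : R :=
  \sum_(S in F) mu_set p S.

Definition monotone_increasing (X : finType) (F : {set {set X}}) : Prop :=
  forall A B : {set X}, A \in F -> A \subset B -> B \in F.

Definition total_influence (R : realType) (X : finType) (p : R)
  (F : {set {set X}}) : R :=
  \sum_(i : X)
    mu p [set S : {set X} | (S \in F) != (((S :\: [set i]) :|: ([set i] :\: S)) \in F)].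

Definition logb (R : realType) (q x : R) : R := ln x / ln q.

Definition xlogb (R : realType) (q x : R) : R :=
  if x == 0 then 0 else x * logb q x.

(* Main.v *)
Require Import Defs.
From mathcomp Require Import all_boot all_order all_algebra.
From mathcomp Require Import reals exp.
From mathcomp Require Import ring lra.
Set Implicit Arguments. Unset Strict Implicit.
Import Order.TTheory GRing.Theory Num.Theory.
Local Open Scope ring_scope.

Lemma ln_lb (R : realType) (g y : R) : 0 < g -> 0 < y -> 1 - y / g <= ln g - ln y.
Proof.
move=> g0 y0.
have hy : 0 < y / g by rewrite divr_gt0.
have := @le_ln1Dx R (y / g - 1).
have e : 1 + (y / g - 1) = y / g by ring.
rewrite e ln_div ?posrE // => H; have := H ltac:(lra); lra.
Qed.

Lemma two_point (R : realType) (p g0 g1 : R) : 0 < p -> p < 1 -> 0 <= g1 -> g1 <= g0 ->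
  ((1-p) * g0 + p * g1) * ln ((1-p) * g0 + p * g1)
  - (1-p) * (g0 * ln g0) - p * (g1 * ln g1) - (1-p) * (g0 - g1) * ln (1-p) >= 0.
Proof.
move=> p0 p1 g10 g10g0.
set q := 1 - p.
have q0 : 0 < q by rewrite /q; lra.
have [g1z|g1p] := eqVneq g1 0.
  rewrite g1z !mul0r !mulr0 !addr0 subr0 subr0.
  have [g0z|g0p] := eqVneq g0 0.
    rewrite g0z !(mulr0, mul0r, subr0, addr0, sub0r, oppr0) /=; lra.
  have g0p' : 0 < g0 by rewrite lt_def g0p; lra.
  rewrite lnM ?posrE //; lra.
have g1p' : 0 < g1 by rewrite lt_def g1p.
have g0p : 0 < g0 by lra.
set g := q * g0 + p * g1.
have gp : 0 < g by rewrite /g; nra.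
have h1 := ln_lb gp g1p'.
have h2 := ln_lb gp g0p.
have qg0 : 0 < q * g0 by nra.
have h3 := ln_lb gp qg0.
rewrite lnM ?posrE // in h3.
have e1 : p * g1 * (1 - g1/g) <= p * g1 * (ln g - ln g1) by rewrite ler_wpM2l //; nra.
have e2 : q * g1 * (1 - g0/g) <= q * g1 * (ln g - ln g0) by rewrite ler_wpM2l //; nra.
have e3 : q * (g0 - g1) * (1 - q * g0/g) <= q * (g0 - g1) * (ln g - (ln q + ln g0))
  by rewrite ler_wpM2l //; nra.
have E : p * g1 * (1 - g1/g) + q * g1 * (1 - g0/g) + q * (g0 - g1) * (1 - q * g0/g)
   = p * q * g1 * (g0 - g1) / g.
  rewrite /g /q; field; rewrite -/q -/g; lra.
have F : 0 <= p * q * g1 * (g0 - g1) / g.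
  apply: divr_ge0; last lra. apply: mulr_ge0; last lra.
  apply: mulr_ge0; last lra. apply: mulr_ge0; lra.
have : g * ln g = p * g1 * ln g + q * g1 * ln g + q * (g0 - g1) * ln g by rewrite /g; ring.
lra.
Qed.

Section B.
Variable R : realType.
Variable X : finType.
Variable p : R.

Definition wt (D S : {set X}) : R := p ^+ #|S| * (1 - p) ^+ (#|D| - #|S|).

Lemma split_sum (D : {set X}) x (F : {set X} -> R) : x \in D ->
  \sum_(S : {set X} | S \subset D) F S =
  \sum_(S : {set X} | S \subset D :\ x) F S + \sum_(T : {set X} | T \subset D :\ x) F (x |: T).
Proof.
move=> xD.
rewrite [LHS](bigID (fun S : {set X} => x \in S)) /= addrC; congr (_ + _).
  by apply: eq_bigl => S; rewrite subsetD1.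
rewrite (reindex_onto (fun T => x |: T) (fun S => S :\ x)) /=; last first.
  by move=> S /andP [_ xS]; rewrite setD1K.
apply: eq_bigl => T; apply/idP/idP.
  case/andP => /andP [sD _] /eqP <-; exact: setSD.
move=> sT; have xT : x \notin T by move: sT; rewrite subsetD1 => /andP [].
rewrite setU1K // eqxx setU11 andbT andbT.
rewrite subUset sub1set xD /=; apply: subset_trans sT _; exact: subsetDl.
Qed.

Lemma wt_out (D T : {set X}) x : x \in D -> T \subset D :\ x ->
  wt D T = (1 - p) * wt (D :\ x) T.
Proof.
move=> xD sT; rewrite /wt (cardsD1 x D) xD add1n.
have le := subset_leq_card sT.
by rewrite subSn // exprS mulrCA.
Qed.

Lemma wt_in (D T : {set X}) x : x \in D -> T \subset D :\ x ->
  wt D (x |: T) = p * wt (D :\ x) T.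
Proof.
move=> xD sT; have xT : x \notin T by move: sT; rewrite subsetD1 => /andP [].
rewrite /wt (cardsD1 x D) xD add1n cardsU1 xT add1n subSS.
by rewrite exprS mulrA.
Qed.

Definition msum (D : {set X}) (G : {set X} -> bool) : R :=
  \sum_(S : {set X} | S \subset D) (if G S then wt D S else 0).

Definition Bsum (D : {set X}) (G : {set X} -> bool) : R :=
  \sum_(i in D) \sum_(S : {set X} | S \subset D)
     (if (i \notin S) && G S && ~~ G (i |: S) then wt D S else 0).

Definition dc (G : {set X} -> bool) := forall S T : {set X}, T \subset S -> G S -> G T.

Lemma wt_ge0 (D S : {set X}) : 0 <= p -> p <= 1 -> 0 <= wt D S.
Proof. by move=> p0 p1; rewrite /wt mulr_ge0 // exprn_ge0 // subr_ge0. Qed.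

Lemma msum_ge0 (D : {set X}) (G : {set X} -> bool) : 0 <= p -> p <= 1 -> 0 <= msum D G.
Proof.
move=> p0 p1; apply: sumr_ge0 => S _; case: (G S) => //; exact: wt_ge0.
Qed.

Lemma msum_le (D : {set X}) (G H : {set X} -> bool) : 0 <= p -> p <= 1 ->
  (forall S, G S -> H S) -> msum D G <= msum D H.
Proof.
move=> p0 p1 GH; apply: ler_sum => S _.
case: (boolP (G S)) => GS; first by rewrite (GH _ GS).
case: (H S) => //; exact: wt_ge0.
Qed.

Lemma msum_rec (D : {set X}) (G : {set X} -> bool) x : x \in D ->
  msum D G = (1 - p) * msum (D :\ x) G + p * msum (D :\ x) (fun T => G (x |: T)).
Proof.
move=> xD; rewrite /msum (split_sum _ xD) !big_distrr /=; congr (_ + _).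
  apply: eq_bigr => S sS; rewrite (wt_out xD sS); case: (G S) => //; by rewrite mulr0.
apply: eq_bigr => S sS; rewrite (wt_in xD sS); case: (G _) => //; by rewrite mulr0.
Qed.

Lemma Bsum_rec (D : {set X}) (G : {set X} -> bool) x : x \in D -> dc G ->
  Bsum D G = (1 - p) * Bsum (D :\ x) G + p * Bsum (D :\ x) (fun T => G (x |: T))
     + (1 - p) * (msum (D :\ x) G - msum (D :\ x) (fun T => G (x |: T))).
Proof.
move=> xD dG; rewrite /Bsum (bigD1 x xD) /= addrC; congr (_ + _).
  rewrite (eq_bigl (fun i => i \in D :\ x)); last by move=> i; rewrite in_setD1 andbC.
  rewrite !big_distrr -big_split /=; apply: eq_bigr => i; rewrite in_setD1 => /andP [ix iD].
  rewrite (split_sum _ xD) !big_distrr /=; congr (_ + _).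
    apply: eq_bigr => S sS; rewrite (wt_out xD sS).
    case: (_ && _) => //; by rewrite mulr0.
  apply: eq_bigr => S sS; rewrite (wt_in xD sS).
  rewrite !inE (negbTE ix) /= setUCA.
  case: (_ && _) => //; by rewrite mulr0.
rewrite (split_sum _ xD) [X in _ + X]big1; last first.
  by move=> T _; rewrite setU11.
rewrite addr0 /msum -sumrB big_distrr /=; apply: eq_bigr => S sS.
have xS : x \notin S by move: sS; rewrite subsetD1 => /andP [].
rewrite xS (wt_out xD sS) /=.
have h : G (x |: S) -> G S by apply: dG; exact: subsetUr.
case: (boolP (G (x |: S))) => h1; first by rewrite (h h1) /=; ring.
by case: (G S) => /=; ring.
Qed.

Lemma mall n (D : {set X}) : #|D| = n -> msum D (fun _ => true) = 1.
Proof.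
elim: n D => [|n IH] D hD.
  have -> : D = set0 by apply/eqP; rewrite -cards_eq0 hD.
  rewrite /msum (eq_bigl (pred1 set0)); last by move=> S; rewrite subset0.
  by rewrite big_pred1_eq /wt cards0 expr0 mul1r.
have [x xD] : exists x, x \in D.
  by apply/set0Pn; rewrite -card_gt0 hD.
rewrite (msum_rec _ xD) !IH; first (by rewrite !mulr1 subrK).
all: by move: hD; rewrite (cardsD1 x D) xD add1n => -[].
Qed.

Definition fl (y : R) : R := y * ln y / ln (1 - p).

Lemma step (g0 g1 : R) : 0 < p -> p < 1 -> 0 <= g1 -> g1 <= g0 ->
  fl ((1 - p) * g0 + p * g1) <= (1 - p) * fl g0 + p * fl g1 + (1 - p) * (g0 - g1).
Proof.
move=> p0 p1 h1 h2.
have E := two_point p0 p1 h1 h2.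
have L0 : ln (1 - p) < 0 by apply: ln_lt0; apply/andP; split; lra.
set L := ln (1 - p) in L0 E *.
set g := (1 - p) * g0 + p * g1 in E *.
set N := g * ln g - (1 - p) * (g0 * ln g0) - p * (g1 * ln g1) - (1 - p) * (g0 - g1) * L in E.
have key : (1 - p) * fl g0 + p * fl g1 + (1 - p) * (g0 - g1) - fl g = (- N) / L.
  rewrite /fl -/L /N; field; lra.
have : 0 <= (- N) / L.
  rewrite -mulrNN -invrN opprK; apply: divr_ge0; lra.
lra.
Qed.

Lemma main_gen n (D : {set X}) (G : {set X} -> bool) : 0 < p -> p < 1 ->
  #|D| = n -> dc G -> fl (msum D G) <= Bsum D G.
Proof.
move=> p0 p1; elim: n D G => [|n IH] D G hD dG.
  have -> : D = set0 by apply/eqP; rewrite -cards_eq0 hD.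
  rewrite /Bsum big_set0 /msum (eq_bigl (pred1 set0)); last by move=> S; rewrite subset0.
  rewrite big_pred1_eq /wt cards0 expr0 mul1r /fl.
  by case: (G set0); rewrite ?ln1 ?mul0r ?mulr0 ?mul0r.
have [x xD] : exists x, x \in D.
  by apply/set0Pn; rewrite -card_gt0 hD.
have hD' : #|D :\ x| = n by move: hD; rewrite (cardsD1 x D) xD add1n => -[].
have dG1 : dc (fun T => G (x |: T)).
  by move=> S T sTS; apply: dG; apply: setUS.
rewrite (Bsum_rec xD dG) (msum_rec _ xD).
have p0' : 0 <= p by lra.
have p1' : p <= 1 by lra.
have h1 := msum_ge0 (D :\ x) (fun T => G (x |: T)) p0' p1'.
have h2 : msum (D :\ x) (fun T => G (x |: T)) <= msum (D :\ x) G.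
  apply: msum_le => // S; apply: dG; exact: subsetUr.
apply: le_trans (step p0 p1 h1 h2) _.
have I0 := IH _ G hD' dG.
have I1 := IH _ _ hD' dG1.
have q0 : 0 <= 1 - p by lra.
have := ler_wpM2l q0 I0.
have := ler_wpM2l p0' I1.
lra.
Qed.
End B.

Theorem mainTheorem2 (R : realType) (X : finType) (p : R)
  (F : {set {set X}}) :
  0 < p -> p < 1 -> monotone_increasing F ->
  (1 - p) * total_influence p F >= xlogb (1 - p) (1 - mu p F).
Proof.
move=> p0 p1 mF.
pose G := fun S : {set X} => S \notin F.
have dG : dc G.
  move=> S T sTS; rewrite /G; apply: contra => TF; exact: mF TF sTS.
have mu_ms : forall A : {set {set X}}, mu p A = msum p setT (fun S => S \in A).
  move=> A; rewrite /mu /msum big_mkcond /=; apply: eq_big => S.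
    by rewrite subsetT.
  by move=> _; rewrite /wt /mu_set cardsT.
have h1 : 1 - mu p F = msum p setT G.
  rewrite mu_ms -(@mall R X p _ setT erefl) /msum -sumrB; apply: eq_bigr => S _.
  by rewrite /G; case: (S \in F) => /=; rewrite ?subr0 ?subrr.
have h2 : (1 - p) * total_influence p F = Bsum p setT G.
  rewrite /total_influence /Bsum big_distrr /= [RHS](eq_bigl xpredT); last first.
    by move=> i; rewrite in_setT.
  apply: eq_bigr => i _.
  set D' := [set: X] :\ i.
  pose c := fun S : {set X} => (S \notin F) && (i |: S \in F).
  have iT : i \in [set: X] by rewrite in_setT.
  have niS : forall S : {set X}, S \subset D' -> i \notin S.
    by move=> S; rewrite /D' subsetD1 => /andP [].
  set A := [set S : {set X} | _].
  have eA : forall S : {set X}, S \subset D' -> (S \in A) = c S.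
    move=> S sS; have iS := niS _ sS.
    rewrite inE; have -> : (S :\: [set i]) :|: ([set i] :\: S) = i |: S.
      apply/setP => y; rewrite !inE; case: (eqVneq y i) => [->|yi];
        rewrite ?eqxx ?(negbTE iS) ?(negbTE yi) /=; by case: (_ \in S).
    rewrite /c; case: (boolP (S \in F)) => SF /=.
      by rewrite (mF _ _ SF (subsetUr _ _)).
    by case: (_ \in F).
  have eB : forall S : {set X}, S \subset D' -> (i |: S \in A) = c S.
    move=> S sS; have iS := niS _ sS.
    rewrite inE; have -> : ((i |: S) :\: [set i]) :|: ([set i] :\: (i |: S)) = S.
      apply/setP => y; rewrite !inE; case: (eqVneq y i) => [->|yi];
        rewrite ?eqxx ?(negbTE iS) ?(negbTE yi) /=; by case: (_ \in S).
    rewrite /c; case: (boolP (S \in F)) => SF /=.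
      by rewrite (mF _ _ SF (subsetUr _ _)).
    by case: (_ \in F).
  rewrite mu_ms (msum_rec _ _ iT) -/D'.
  have -> : msum p D' (fun S => S \in A) = msum p D' c.
    by apply: eq_bigr => S sS; rewrite eA.
  have -> : msum p D' (fun T => i |: T \in A) = msum p D' c.
    by apply: eq_bigr => S sS; rewrite eB.
  rewrite (split_sum _ iT) -/D' [Y in _ = _ + Y]big1; last by move=> T _; rewrite setU11.
  rewrite addr0.
  have -> : \sum_(S : {set X} | S \subset D')
      (if (i \notin S) && G S && ~~ G (i |: S) then wt p [set: X] S else 0)
      = (1 - p) * msum p D' c.
    rewrite /msum big_distrr; apply: eq_bigr => S sS.
    rewrite (niS _ sS) (wt_out _ iT sS) /G /c /= negbK.
    by case: (_ && _); rewrite ?mulr0.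
  have -> : (1 - p) * msum p D' c + p * msum p D' c = msum p D' c.
    by rewrite -mulrDl subrK mul1r.
  by [].
rewrite h1 h2.
have -> : xlogb (1 - p) (msum p [set: X] G) = fl p (msum p [set: X] G).
  rewrite /xlogb /fl /logb; case: eqP => [->|_]; first by rewrite !mul0r.
  by rewrite mulrA.
exact: (main_gen p0 p1 erefl dG).
Qed.
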